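(* Each of the two non-abelian groups of order $27$ has both a narcissistic terrace and a directed half-and-half terrace. The non-abelian group of order $39$ has a directed half-and-half terrace.
   Context: Let $G$ be a finite group of odd order $n$ and $\mathbf{a}=(a_1,\dots,a_n)$ an arrangement of its elements, with $b_i = a_i^{-1}a_{i+1}$ for $1\le i \le n-1$. Since $n$ is odd, $G$ has no involutions; $\mathbf{a}$ is a terrace if for each $x \ne e$ the elements $x$ and $x^{-1}$ together occur exactly twice in $(b_1,\dots,b_{n-1})$, and a directed terrace if the $b_i$ are pairwise distinct. A terrace $\mathbf{a}$ is half-and-half if for each set $\{g,g^{-1}\}$ with $g\ne e$ exactly one element occurrence from that set lies in $(b_1,\dots,b_{(n-1)/2})$ (and hence exactly one lies in $(b_{(n+1)/2},\dots,b_{n-1})$). A terrace is narcissistic if the sequence $(b_1,\dots,b_{n-1})$ equals its reverse. A directed half-and-half terrace is a directed terrace that is half-and-half. There is a unique non-abelian group of order 39 up to isomorphism. *)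

(* Defs.v *)
From mathcomp Require Import all_boot all_fingroup.
Set Implicit Arguments. Unset Strict Implicit. Unset Printing Implicit Defensive.
Local Open Scope group_scope.

Section Terraces.
Variable gT : finGroupType.
Implicit Types (a b : seq gT) (x : gT).

Definition arrangement a : bool := perm_eq a (enum gT).

Definition quot_seq a : seq gT :=
  [seq (nth 1 a i)^-1 * nth 1 a i.+1 | i <- iota 0 (size a).-1].

Definition count_pm x b : nat := count (fun y => (y == x) || (y == x^-1)) b.

Definition terrace a : bool :=
  arrangement a && [forall x : gT, (x != 1) ==> (count_pm x (quot_seq a) == 2%N)].

Definition directed_terrace a : bool :=
  arrangement a && uniq (quot_seq a).

Definition half_and_half a : bool :=
  terrace a &&
  [forall x : gT, (x != 1) ==>
     (count_pm x (take ((size a).-1./2) (quot_seq a)) == 1%N)].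

Definition narcissistic_terrace a : bool :=
  terrace a && (quot_seq a == rev (quot_seq a)).

Definition directed_hh_terrace a : bool :=
  directed_terrace a && half_and_half a.

End Terraces.

(* Main.v *)
Require Import Defs.
From mathcomp Require Import all_boot all_fingroup all_solvable.
From mathcomp Require Import zify.
Set Implicit Arguments. Unset Strict Implicit. Unset Printing Implicit Defensive.

Section Model.
Variables (N : nat) (mmul : nat -> nat -> nat).
Definition minv p := head 0 [seq q <- iota 0 N | mmul p q == 0].
Definition mq (s : seq nat) :=
  [seq mmul (minv (nth 0 s i)) (nth 0 s i.+1) | i <- iota 0 (size s).-1].
Definition mcnt m s := let mi := minv m in count (fun y => (y == m) || (y == mi)) s.
Definition mterr s := let q := mq s in
  [&& all (fun k => k < N) s, uniq s, size s == N &
      all (fun m => mcnt m q == 2) (iota 1 N.-1)].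
Definition mnarc s := mterr s && (mq s == rev (mq s)).
Definition mdhh s := let q := mq s in let t := take ((size s).-1./2) q in
  [&& mterr s, uniq q & all (fun m => mcnt m t == 1) (iota 1 N.-1)].
Definition mok := all (fun p => (minv p < N) && (mmul p (minv p) == 0)
   && all (fun q => mmul p q < N) (iota 0 N)) (iota 0 N).
End Model.

Section Transfer.
Local Open Scope group_scope.
Variables (gT : finGroupType) (N : nat) (mmul : nat -> nat -> nat) (phi : nat -> gT).
Hypotheses (hN : #|gT| = N) (hok : mok N mmul)
  (phiM : forall p q, p < N -> q < N -> phi (mmul p q) = phi p * phi q)
  (phi_inj : {in [pred k | k < N] &, injective phi}) (phi0 : phi 0 = 1).

Let okP p : p < N -> [/\ minv N mmul p < N, mmul p (minv N mmul p) = 0 &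
   forall q, q < N -> mmul p q < N].
Proof.
move=> pN; have /allP/(_ p) := hok; rewrite mem_iota add0n => /(_ pN).
case/andP=> /andP[-> /eqP ->] /allP H; split=> // q qN.
by apply: H; rewrite mem_iota.
Qed.

Lemma phiV p : p < N -> phi (minv N mmul p) = (phi p)^-1.
Proof.
move=> pN; have [iN e _] := okP pN.
by apply: (mulgI (phi p)); rewrite mulgV -phiM // e phi0.
Qed.

Lemma phi_surj g : exists2 m, m < N & phi m = g.
Proof.
pose s := map phi (iota 0 N).
have us : uniq s by rewrite map_inj_in_uniq ?iota_uniq // => a b;
  rewrite !mem_iota !add0n; apply: phi_inj.
have [_ eqs] : (size s = size (enum gT)) * (s =i enum gT).
  apply: uniq_min_size => //; first by move=> x _; rewrite mem_enum.
  by rewrite -cardE hN /s size_map size_iota.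
have : g \in s by rewrite eqs mem_enum.
by case/mapP=> m; rewrite mem_iota add0n => mN ->; exists m.
Qed.

Lemma nth_phi s i : all (fun k => k < N) s -> nth 1 (map phi s) i = phi (nth 0 s i).
Proof.
move=> _; elim: s i => [|a s IH] [|i] //=; by rewrite nth_nil phi0.
Qed.

Lemma quot_map s : all (fun k => k < N) s ->
  quot_seq (map phi s) = map phi (mq N mmul s).
Proof.
move=> sN; rewrite /quot_seq /mq size_map -map_comp; apply/eq_in_map => i.
rewrite mem_iota add0n => ilt /=.
have iN : nth 0 s i < N by apply: (allP sN); rewrite mem_nth // (leq_trans ilt) // leq_pred.
have iN' : nth 0 s i.+1 < N.
  by apply: (allP sN); rewrite mem_nth //; move: ilt; case: (size s).
have [vN _ _] := okP iN.
by rewrite !nth_phi // phiM // phiV.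
Qed.

Lemma nth_lt s i : all (fun k => k < N) s -> i < size s -> nth 0 s i < N.
Proof. by move=> sN ilt; apply: (allP sN); rewrite mem_nth. Qed.

Lemma mq_lt s : all (fun k => k < N) s -> all (fun k => k < N) (mq N mmul s).
Proof.
move=> sN; apply/allP=> k /mapP[i]; rewrite mem_iota add0n => ilt ->.
have iN : nth 0 s i < N by apply: nth_lt => //; rewrite (leq_trans ilt) // leq_pred.
have iN' : nth 0 s i.+1 < N by apply: nth_lt => //; move: ilt; case: (size s).
have [vN _ _] := okP iN; have [_ _ H] := okP vN; exact: H.
Qed.

Lemma cnt_map m q : m < N -> all (fun k => k < N) q ->
  count_pm (phi m) (map phi q) = mcnt N mmul m q.
Proof.
move=> mN qN; rewrite /count_pm /mcnt count_map; apply: eq_in_count => y yq /=.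
have yN : y < N by apply: (allP qN).
have [vN _ _] := okP mN.
rewrite -phiV //; congr (_ || _); apply/eqP/eqP => [|-> //]; exact: phi_inj.
Qed.

Lemma iota1P m : m < N -> m != 0 -> m \in iota 1 N.-1.
Proof. by rewrite mem_iota; case: m => // m; case: N. Qed.

Lemma all_cnt q c : all (fun k => k < N) q ->
  all (fun m => mcnt N mmul m q == c) (iota 1 N.-1) ->
  [forall x : gT, (x != 1) ==> (count_pm x (map phi q) == c)].
Proof.
move=> qN /allP H; apply/forallP => x; apply/implyP => x1.
have [m mN em] := phi_surj x; rewrite -em cnt_map //; apply: H; apply: iota1P => //.
by apply: contra x1 => /eqP m0; rewrite -em m0 phi0.
Qed.

Lemma arr_map s : all (fun k => k < N) s -> uniq s -> size s = N ->
  arrangement (map phi s).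
Proof.
move=> sN us ss; rewrite /arrangement; apply: uniq_perm; rewrite ?enum_uniq //.
  rewrite map_inj_in_uniq // => a b aS bS; apply: phi_inj; exact: (allP sN).
have [_ eqs] : (size s = size (iota 0 N)) * (s =i iota 0 N).
  apply: uniq_min_size => //; last by rewrite size_iota ss.
  by move=> k kS; rewrite mem_iota add0n (allP sN).
move=> x; rewrite mem_enum; have [m mN <-] := phi_surj x.
by rewrite map_f // eqs mem_iota.
Qed.

Lemma terr_map s : mterr N mmul s -> terrace (map phi s).
Proof.
case/and4P=> sN us /eqP ss H; rewrite /terrace arr_map //= quot_map //.
exact: all_cnt (mq_lt sN) H.
Qed.

Lemma narc_map s : mnarc N mmul s -> narcissistic_terrace (map phi s).
Proof.
case/andP=> T /eqP E; rewrite /narcissistic_terrace terr_map //=.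
have [sN _ _ _] := and4P T.
by rewrite quot_map // -map_rev -E.
Qed.

Lemma dhh_map s : mdhh N mmul s -> directed_hh_terrace (map phi s).
Proof.
case/and3P=> T uq H; have [sN us /eqP ss _] := and4P T.
rewrite /directed_hh_terrace /directed_terrace /half_and_half terr_map //=.
rewrite arr_map //= quot_map // map_inj_in_uniq ?uq; last first.
  move=> a b aS bS; apply: phi_inj; exact: (allP (mq_lt sN)).
rewrite size_map -map_take; apply: all_cnt H.
by apply/allP=> k /mem_take; apply: (allP (mq_lt sN)).
Qed.

End Transfer.

Definition sdm n r p q := ((p %/ n + q %/ n) %% 3) * n + ((p %% n) * r ^ (q %/ n) + q %% n) %% n.
Definition hm p q := ((p %/ 9 + q %/ 9) %% 3) * 9 + (((p %/ 3) %% 3 + (q %/ 3) %% 3) %% 3) * 3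
   + (p %% 3 + ((p %/ 3) %% 3) * (q %/ 9) + q %% 3) %% 3.

Section Grp.
Local Open Scope group_scope.
Variable gT : finGroupType.

Lemma conj_pow (x y : gT) r c : x ^ y = x ^+ r -> x ^ (y ^+ c) = x ^+ (r ^ c).
Proof.
move=> xy; elim: c => [|c IH]; first by rewrite expg0 conjg1 expn0 expg1.
by rewrite expgSr conjgM IH conjXg xy -expgM expnS.
Qed.

Lemma sd_phiM (x y : gT) n r : 0 < n -> x ^+ n = 1 -> y ^+ 3 = 1 -> x ^ y = x ^+ r ->
  forall p q, y ^+ (sdm n r p q %/ n) * x ^+ (sdm n r p q %% n) =
     (y ^+ (p %/ n) * x ^+ (p %% n)) * (y ^+ (q %/ n) * x ^+ (q %% n)).
Proof.
move=> n0 xn y3 xy p q; rewrite /sdm.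
rewrite divnMDl // (divn_small (ltn_pmod _ n0)) addn0 modnMDl modn_mod.
set a := p %/ n; set b := p %% n; set c := q %/ n; set d := q %% n.
rewrite (expg_mod (a + c) y3) (expg_mod (b * r ^ c + d) xn).
have e1 : x ^+ b * y ^+ c = y ^+ c * x ^+ (b * r ^ c).
  by rewrite conjgC conjXg (conj_pow c xy) -expgM mulnC.
by rewrite expgD expgD mulgA -(mulgA (y ^+ a)) -e1 !mulgA.
Qed.

Lemma dec3 A B C : B < 3 -> C < 3 ->
  [/\ (A * 9 + B * 3 + C) %/ 9 = A, ((A * 9 + B * 3 + C) %/ 3) %% 3 = B & (A * 9 + B * 3 + C) %% 3 = C].
Proof. move=> hB hC; split; lia. Qed.

Lemma heis_phiM (x y z : gT) : x ^+ 3 = 1 -> y ^+ 3 = 1 -> z ^+ 3 = 1 ->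
  commute z x -> commute z y -> x ^ y = x * z ->
  forall p q, let phi k := y ^+ (k %/ 9) * x ^+ ((k %/ 3) %% 3) * z ^+ (k %% 3) in
  phi (hm p q) = phi p * phi q.
Proof.
move=> x3 y3 z3 czx czy xy p q phi; rewrite /phi /hm.
have [-> -> ->] := dec3 ((p %/ 9 + q %/ 9) %% 3)
  (ltn_pmod ((p %/ 3) %% 3 + (q %/ 3) %% 3) (isT : 0 < 3))
  (ltn_pmod (p %% 3 + (p %/ 3) %% 3 * (q %/ 9) + q %% 3) (isT : 0 < 3)).
set j := p %/ 9; set i := (p %/ 3) %% 3; set k := p %% 3.
set l := q %/ 9; set m := (q %/ 3) %% 3; set n := q %% 3.
rewrite (expg_mod (j + l) y3) (expg_mod (i + m) x3) (expg_mod (k + i * l + n) z3).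
have zy : forall a, (z ^+ a) ^ y = z ^+ a.
  by move=> a; rewrite conjXg; congr (_ ^+ _); apply/conjg_fixP/commgP.
have xyl : forall b, x ^ (y ^+ b) = x * z ^+ b.
  elim=> [|b IH]; first by rewrite conjg1 mulg1.
  by rewrite expgSr conjgM IH conjMg xy zy -mulgA -expgS.
have xil : (x ^+ i) ^ (y ^+ l) = x ^+ i * z ^+ (i * l).
  rewrite conjXg xyl expgMn; last by apply: commuteX; apply: commute_sym.
  by rewrite -expgM mulnC.
have e1 : x ^+ i * y ^+ l = y ^+ l * (x ^+ i * z ^+ (i * l)) by rewrite conjgC xil.
have e2 : z ^+ k * y ^+ l = y ^+ l * z ^+ k by apply: commuteX2.
have e3 : z ^+ (i * l + k) * x ^+ m = x ^+ m * z ^+ (i * l + k) by apply: commuteX2.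
rewrite !mulgA -(mulgA _ (z ^+ k)) e2 mulgA -(mulgA _ (x ^+ i)) e1 !mulgA.
rewrite -(mulgA _ (z ^+ (i * l))) -(expgD z) -(mulgA _ _ (x ^+ m)) e3 !mulgA.
by rewrite (addnC (i * l)%N k) !expgD !mulgA.
Qed.

Lemma finish N mmul (phi : nat -> gT) : #|gT| = N -> mok N mmul ->
  (forall p q, p < N -> q < N -> phi (mmul p q) = phi p * phi q) -> phi 0 = 1 ->
  (forall H : {group gT}, (forall k, k < N -> phi k \in H) -> N <= #|H|) ->
  {in [pred k | k < N] &, injective phi}.
Proof.
move=> hN hok phiM phi0 hH.
have clo p q : p < N -> q < N -> mmul p q < N.
  move=> pN qN; have /allP/(_ p) := hok; rewrite mem_iota add0n => /(_ pN).
  by case/andP=> _ /allP; apply; rewrite mem_iota.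
have N0 : 0 < N by rewrite -hN; apply/card_gt0P; exists 1.
pose f := fun k : 'I_N => phi k.
pose S := f @: [set: 'I_N].
have gS : group_set S.
  apply/andP; split.
    by apply/imsetP; exists (Ordinal N0); rewrite ?inE //= /f /= phi0.
  apply/subsetP=> _ /mulsgP[a b /imsetP[i _ ->] /imsetP[j _ ->] ->].
  apply/imsetP; exists (Ordinal (clo _ _ (ltn_ord i) (ltn_ord j))); rewrite ?inE //.
  by rewrite /f /= phiM.
have cS : #|S| == #|[set: 'I_N]|.
  rewrite eqn_leq leq_imset_card cardsT card_ord.
  apply: (hH (Group gS)) => k kN /=.
  by apply/imsetP; exists (Ordinal kN); rewrite ?inE.
have /imset_injP finj := cS.
move=> a b; rewrite !inE => aN bN e.
have := finj (Ordinal aN) (Ordinal bN); rewrite !inE => /(_ isT isT e).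
by case.
Qed.

Lemma sd_inj n r (x y : gT) : 1 < n -> #|gT| = (3 * n)%N -> mok ((3 * n)%N) (sdm n r) ->
  x ^+ n = 1 -> y ^+ 3 = 1 -> x ^ y = x ^+ r ->
  (forall H : {group gT}, x \in H -> y \in H -> (3 * n)%N <= #|H|) ->
  {in [pred k | k < (3 * n)%N] &, injective (fun k => y ^+ (k %/ n) * x ^+ (k %% n))}.
Proof.
move=> n1 hN hok xn y3 xy hH; have n0 : 0 < n by apply: ltnW.
apply: (finish hN hok) => //.
- by move=> p q _ _; apply: sd_phiM.
- by rewrite div0n mod0n mulg1.
move=> H /= hk; apply: hH.
  have := hk 1%N (leq_trans n1 (leq_pmull n (isT : 0 < 3))).
  by rewrite divn_small // modn_small // mul1g expg1.
have := hk n (ltn_Pmull (isT : 1 < 3) n0).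
by rewrite divnn n0 modnn mulg1 expg1.
Qed.

Lemma heis_inj (x y z : gT) : #|gT| = 27 -> mok 27 hm ->
  x ^+ 3 = 1 -> y ^+ 3 = 1 -> z ^+ 3 = 1 ->
  commute z x -> commute z y -> x ^ y = x * z ->
  (forall H : {group gT}, x \in H -> y \in H -> 27 <= #|H|) ->
  {in [pred k | k < 27] &,
    injective (fun k => y ^+ (k %/ 9) * x ^+ ((k %/ 3) %% 3) * z ^+ (k %% 3))}.
Proof.
move=> hN hok x3 y3 z3 czx czy xy hH.
apply: (finish hN hok) => //.
- by move=> p q _ _; apply: heis_phiM.
- by rewrite !mulg1.
move=> H /= hk; apply: hH.
  by have := hk 3%N isT; rewrite /= !mulg1 mul1g.
by have := hk 9%N isT; rewrite /= !mulg1.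
Qed.
End Grp.

Section Gens.
Local Open Scope group_scope.

Lemma g27_mod (gT : finGroupType) : #|[set: gT]| = 27%N -> ~~ abelian [set: gT] ->
  (exists x : gT, #[x] = 9%N) -> exists x y : gT, [/\ x ^+ 9 = 1, y ^+ 3 = 1, x ^ y = x ^+ 4 &
    (forall H : {group gT}, x \in H -> y \in H -> 27 <= #|H|)].
Proof.
move=> oG nab [x0 ox0].
set G := [set: gT].
have pG : 3.-group G by rewrite /pgroup oG.
have cyc : cyclic <[x0]> by apply: cycle_cyclic.
have iX : #|G : <[x0]>| = 3%N.
  by rewrite -divgS ?subsetT // oG -orderE ox0.
have := maximal_cycle_extremal pG nab cyc (subsetT _) iX.
rewrite orbF => /eqP/modular_group_classP[p p_pr [n n_gt isoG]].
have n_gt2 : 2 < n by apply: leq_trans n_gt; rewrite leq_addl.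
have oGp := card_isog isoG; rewrite card_modular_group // oG in oGp.
have p3 : p = 3%N.
  have : p \in primes 27 by rewrite mem_primes p_pr /= oGp dvdn_exp // ltnW // ltnW.
  by rewrite inE => /eqP.
subst p.
have n3 : n = 3%N by apply/eqP; rewrite -(eqn_exp2l _ _ (isT : 1 < 3)) -oGp.
subst n.
have [[x y] genG [oy xy]] := generators_modular_group p_pr n_gt2 isoG.
have [_ _ _ defG _] := extremal_generators_facts p_pr genG.
have [_ _ ox _] := genG.
exists x, y; split.
- by rewrite -(expg_order x) ox.
- by rewrite -(expg_order y) oy.
- by rewrite xy.
move=> H xH yH.
have sub : <[x]> * <[y]> \subset H by rewrite mul_subG // cycle_subG.
by rewrite -oG; move: (subset_leq_card sub); rewrite defG.
Qed.

Lemma g27_heis (gT : finGroupType) : #|[set: gT]| = 27%N -> ~~ abelian [set: gT] ->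
  ~ (exists x : gT, #[x] = 9%N) -> exists x y z : gT, [/\ x ^+ 3 = 1, y ^+ 3 = 1, z ^+ 3 = 1,
    commute z x & commute z y] /\ x ^ y = x * z /\
    (forall H : {group gT}, x \in H -> y \in H -> 27 <= #|H|).
Proof.
move=> oG nab no9.
set G := [set: gT].
have pG : 3.-group G by rewrite /pgroup oG.
have expG : exponent G %| 3.
  apply/exponentP => g _; apply/eqP; rewrite -order_dvdn.
  have : #[g] \in divisors 27 by rewrite -dvdn_divisors // -oG order_dvdG ?inE.
  rewrite !inE => /or4P[] /eqP og; rewrite og //.
    by case: no9; exists g.
  case/negP: nab; have e : <[g]> = G.
    by apply/eqP; rewrite eqEcard subsetT -orderE og oG /=.
  by move: (cycle_abelian g); rewrite e.
have esG : extraspecial G by apply: p3group_extraspecial pG nab _; rewrite oG.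
have isoG : G \isog 3^{1+2} by apply: isog_pX1p2 => //.
case/(isoGrpP _ (Grp_pX1p2 (isT : prime 3))): isoG => _.
case/existsP=> -[x y] /= /eqP[defG x3 y3 /eqP cx /eqP cy].
have czx : commute [~ x, y] x by apply/commgP.
have czy : commute [~ x, y] y by apply/commgP.
exists x, y, [~ x, y]; split; [split => // | split].
- have := conjXg x y 3; rewrite x3 conj1g conjg_mulR expgMn; last first.
    by apply: commute_sym.
  by rewrite x3 mul1g => <-.
- exact: conjg_mulR.
move=> H xH yH.
have sub : <[x]> <*> <[y]> \subset H by rewrite join_subG !cycle_subG xH.
by rewrite -oG; move: (subset_leq_card sub); rewrite defG.
Qed.

Lemma g39 (gT : finGroupType) : #|[set: gT]| = 39%N ->
  exists x y : gT, [/\ #[x] = 13%N, #[y] = 3%N, x ^ y \in [:: x ^+ 1; x ^+ 3; x ^+ 9] &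
    (forall H : {group gT}, x \in H -> y \in H -> 39 <= #|H|)].
Proof.
move=> oG; set G := [set: gT].
have d13 : (13 %| #|G|)%N by rewrite oG.
have d3 : (3 %| #|G|)%N by rewrite oG.
have [x _ ox] := Cauchy (isT : prime 13) d13.
have [y _ oy] := Cauchy (isT : prime 3) d3.
exists x, y; split => //; last first.
  move=> H xH yH; have H0 : 0 < #|H| by apply/card_gt0P; exists x.
  apply: dvdn_leq => //; rewrite (@Gauss_dvd 13 3) //.
  by rewrite -{1}ox -{1}oy !order_dvdG.
have [P sylP] := Sylow_exists 13 G.
have oP : #|P| = 13%N by rewrite (card_Hall sylP) oG p_part.
have nS : #|'Syl_13(G)| = 1%N.
  move: (card_Syl_mod G (isT : prime 13)); have := card_Syl_dvd 13 G.
  rewrite oG dvdn_divisors // !inE.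
  by case/or4P=> /eqP -> /eqP.
have nPG : G \subset 'N(P).
  have := card_Syl sylP; rewrite nS => /esym/index1g.
  move=> /(_ (subsetIl _ _)) e.
  by apply: subset_trans (subsetIr G _); rewrite /= e.
have nsP : P <| G by rewrite /normal subsetT nPG.
have xP : x \in P.
  rewrite (mem_normal_Hall sylP nsP) ?inE //.
  by rewrite /p_elt ox pnat_id.
have eP : <[x]> = P.
  by apply/eqP; rewrite eqEcard cycle_subG xP -orderE ox oP /=.
have : x ^ y \in <[x]> by rewrite eP memJ_norm // (subsetP nPG) ?inE.
case/cycleP => k xy.
have e3 : x ^ (y ^+ 3) = x ^+ (k ^ 3) by apply: conj_pow.
have y3 : y ^+ 3 = 1 by rewrite -oy expg_order.
rewrite y3 conjg1 in e3.
have /eqP : x ^+ 1 = x ^+ (k ^ 3) by rewrite expg1 -e3.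
rewrite eq_expg_mod_order ox -modnXm => /eqP hk.
rewrite xy -(expg_mod_order x k) ox.
have : k %% 13 < 13 by rewrite ltn_pmod.
move: (k %% 13) hk => j; rewrite modn_small //.
have H : all (fun j => (1 == j ^ 3 %% 13)%N ==> (j \in [:: 1; 3; 9]%N)) (iota 0 13) by [].
move=> hj jl; move/allP/(_ j): H; rewrite mem_iota add0n jl -hj eqxx /= => /(_ isT).
by rewrite !inE => /or3P[] /eqP ->; rewrite eqxx ?orbT.
Qed.
End Gens.

Definition hnl := [:: 0; 16; 15; 24; 5; 25; 17; 11; 7; 2; 18; 23; 6; 9; 22; 8; 1; 20; 21; 10; 13; 3; 26; 4; 12; 14; 19].
Definition hdl := [:: 0; 3; 20; 16; 21; 13; 9; 25; 15; 5; 11; 2; 6; 8; 18; 19; 12; 22; 24; 7; 10; 14; 26; 23; 4; 17; 1].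
Definition mnl := [:: 0; 23; 15; 10; 16; 1; 9; 17; 25; 13; 22; 24; 14; 21; 4; 18; 20; 5; 26; 7; 6; 11; 2; 8; 3; 19; 12].
Definition mdl := [:: 0; 3; 18; 17; 19; 12; 11; 5; 21; 10; 14; 2; 25; 23; 8; 15; 16; 22; 24; 1; 13; 9; 26; 7; 4; 20; 6].
Definition gl := [:: 0; 37; 33; 25; 14; 24; 10; 21; 11; 29; 4; 32; 15; 23; 35; 34; 17; 9; 2; 36; 26; 20; 1; 6; 18; 16; 28; 5; 22; 30; 31; 38; 7; 19; 8; 13; 27; 12; 3].
Lemma c1 : mnarc 27 hm hnl. Proof. vm_compute. reflexivity. Qed.
Lemma c2 : mdhh 27 hm hdl. Proof. vm_compute. reflexivity. Qed.
Lemma c3 : mnarc 27 (sdm 9 4) mnl. Proof. vm_compute. reflexivity. Qed.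
Lemma c4 : mdhh 27 (sdm 9 4) mdl. Proof. vm_compute. reflexivity. Qed.
Lemma c5 : mdhh 39 (sdm 13 3) gl. Proof. vm_compute. reflexivity. Qed.
Lemma c6 : mok 27 hm. Proof. vm_compute. reflexivity. Qed.
Lemma c7 : mok 27 (sdm 9 4). Proof. vm_compute. reflexivity. Qed.
Lemma c8 : mok 39 (sdm 13 3). Proof. vm_compute. reflexivity. Qed.
Lemma c9 : all (fun p => all (fun q => sdm 13 1 p q == sdm 13 1 q p) (iota 0 39)) (iota 0 39). Proof. vm_compute. reflexivity. Qed.
Lemma c10 : mok 39 (sdm 13 1). Proof. vm_compute. reflexivity. Qed.

Section Final.
Local Open Scope group_scope.

Lemma sd_all (gT : finGroupType) n r (x y : gT) : 1 < n -> #|gT| = (3 * n)%N ->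
  mok (3 * n) (sdm n r) -> x ^+ n = 1 -> y ^+ 3 = 1 -> x ^ y = x ^+ r ->
  (forall H : {group gT}, x \in H -> y \in H -> (3 * n)%N <= #|H|) ->
  let phi := fun k => y ^+ (k %/ n) * x ^+ (k %% n) in
  [/\ forall s, mnarc (3 * n) (sdm n r) s -> narcissistic_terrace (map phi s),
      forall s, mdhh (3 * n) (sdm n r) s -> directed_hh_terrace (map phi s) &
      forall g, exists2 m, m < 3 * n & phi m = g].
Proof.
move=> n1 hN hok xn y3 xy hH phi.
have inj := sd_inj n1 hN hok xn y3 xy hH.
have n0 : 0 < n by apply: ltnW.
have phiM : forall p q, p < 3 * n -> q < 3 * n -> phi (sdm n r p q) = phi p * phi q.
  by move=> p q _ _; apply: sd_phiM.
have phi0 : phi 0 = 1 by rewrite /phi div0n mod0n mulg1.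
split.
- by move=> s; apply: (narc_map hN hok phiM inj phi0).
- by move=> s; apply: (dhh_map hN hok phiM inj phi0).
- by move=> g; apply: (phi_surj hN inj).
Qed.

Theorem theorem11 :
  (forall gT : finGroupType,
     #|[set: gT]| = 27 -> ~~ abelian [set: gT] ->
     (exists a : seq gT, narcissistic_terrace a) /\
     (exists a : seq gT, directed_hh_terrace a)) /\
  (forall gT : finGroupType,
     #|[set: gT]| = 39 -> ~~ abelian [set: gT] ->
     exists a : seq gT, directed_hh_terrace a).
Proof.
split.
  move=> gT oG nab; have hN : #|gT| = 27 by rewrite -cardsT.
  case: (boolP [exists x : gT, #[x] == 9]) => [/existsP[x0 /eqP ox0] | no9].
    have [x [y [x9 y3 xy hH]]] := g27_mod oG nab (ex_intro _ x0 ox0).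
    have [Hn Hd _] := @sd_all gT 9 4 x y isT hN c7 x9 y3 xy hH.
    by split; [exists (map (fun k => y ^+ (k %/ 9) * x ^+ (k %% 9)) mnl); apply: Hn c3
              | exists (map (fun k => y ^+ (k %/ 9) * x ^+ (k %% 9)) mdl); apply: Hd c4].
  have no9' : ~ (exists x : gT, #[x] = 9).
    by case=> x ox; case/existsP: no9; exists x; rewrite ox.
  have [x [y [z [[x3 y3 z3 czx czy] [xy hH]]]]] := g27_heis oG nab no9'.
  have inj := heis_inj hN c6 x3 y3 z3 czx czy xy hH.
  pose phi := fun k => y ^+ (k %/ 9) * x ^+ ((k %/ 3) %% 3) * z ^+ (k %% 3).
  have phiM : forall p q, p < 27 -> q < 27 -> phi (hm p q) = phi p * phi q.
    by move=> p q _ _; apply: heis_phiM.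
  have phi0 : phi 0 = 1 by rewrite /phi !mulg1.
  split; [exists (map phi hnl); apply: (narc_map hN c6 phiM inj phi0 c1)
         | exists (map phi hdl); apply: (dhh_map hN c6 phiM inj phi0 c2)].
move=> gT oG nab; have hN : #|gT| = 39 by rewrite -cardsT.
have [x [y [ox oy xyin hH]]] := g39 oG.
have x13 : x ^+ 13 = 1 by rewrite -ox expg_order.
have y3 : y ^+ 3 = 1 by rewrite -oy expg_order.
rewrite !inE in xyin; case/or3P: xyin => /eqP xy.
- have [_ _ surj] := @sd_all gT 13 1 x y isT hN c10 x13 y3 xy hH.
  case/negP: nab; apply/centsP => g _ h _.
  have [p pN <-] := surj g; have [q qN <-] := surj h.
  rewrite /commute -!(sd_phiM (n:=13) (r:=1)) //.
  by have := allP c9 p; rewrite mem_iota add0n pN => /(_ isT) /allP /(_ q);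
     rewrite mem_iota add0n qN => /(_ isT) /eqP ->.
- have [_ Hd _] := @sd_all gT 13 3 x y isT hN c8 x13 y3 xy hH.
  by exists (map (fun k => y ^+ (k %/ 13) * x ^+ (k %% 13)) gl); apply: Hd c5.
- have y2 : (y ^+ 2) ^+ 3 = 1 by rewrite -expgM mulnC expgM y3 expg1n.
  have xy2 : x ^ (y ^+ 2) = x ^+ 3.
    by rewrite (conj_pow 2 xy) -(expg_mod _ x13).
  have hH2 : forall H : {group gT}, x \in H -> y ^+ 2 \in H -> (3 * 13)%N <= #|H|.
    move=> H xH y2H; apply: hH => //.
    have -> : y = (y ^+ 2) ^+ 2 by rewrite -expgM (expgS y 3) y3 mulg1.
    by rewrite groupX.
  have [_ Hd _] := @sd_all gT 13 3 x (y ^+ 2) isT hN c8 x13 y2 xy2 hH2.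
  by exists (map (fun k => y ^+ 2 ^+ (k %/ 13) * x ^+ (k %% 13)) gl); apply: Hd c5.
Qed.
End Final.
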